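(* Let $(a_m)_{m\ge1}$ be defined by $a_1=2$ and $a_{m+1}=a_m+1/a_m$, so that $[-a_m,a_m]$ is the support of the $m$-fold monotone convolution of the standard semicircle law. Then for every $m\ge3$ $$\sqrt{m+\sqrt{m(m+1)}}\;\le\; a_m\;\le\;\sqrt{2m+\sqrt{2m}}.$$
   Context: The standard semicircle law is $\frac1{2\pi}\sqrt{4-x^2}\mathbf 1_{[-2,2]}dx$; monotone convolution $\mu\rhd\nu$ is the probability measure $\rho$ with $H_\rho=H_\mu\circ H_\nu$ where $H_\mu=1/\mathcal G_\mu$ and $\mathcal G_\mu(z)=\int\frac{\mu(dx)}{z-x}$. *)

(* Defs.v *)
From Stdlib Require Import Reals.
Open Scope R_scope.

(* The sequence a_m (m >= 1): a_1 = 2, a_{m+1} = a_m + 1/a_m.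
   Indexing is by m itself; the value at index 0 is an unused placeholder (2). *)
Fixpoint a_seq (m : nat) : R :=
  match m with
  | O => 2
  | S O => 2
  | S ((S _) as k) => a_seq k + / a_seq k
  end.

(* Main.v *)
Require Import Defs.
From Stdlib Require Import Reals Lra Psatz.
Open Scope R_scope.

Lemma a_step n : a_seq (S (S n)) = a_seq (S n) + / a_seq (S n).
Proof. reflexivity. Qed.

Lemma a_pos2 n : 1 <= a_seq n /\ 1 <= a_seq (S n).
Proof.
  induction n as [|n [IH1 IH2]]; [simpl; lra|].
  split; [exact IH2|]. change (1 <= a_seq (S n) + / a_seq (S n)).
  assert (0 < / a_seq (S n)) by (apply Rinv_0_lt_compat; lra). lra.
Qed.

Lemma a_pos n : 1 <= a_seq n.
Proof. apply (a_pos2 n). Qed.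

Lemma sq_step n : (a_seq (S (S n)))^2 = (a_seq (S n))^2 + 2 + / (a_seq (S n))^2.
Proof.
  rewrite a_step. pose proof (a_pos (S n)). field. lra.
Qed.

Lemma f_mono b c : 1 <= b -> b <= c -> b + 2 + / b <= c + 2 + / c.
Proof.
  intros Hb Hc.
  assert (c + 2 + /c - (b + 2 + /b) = (c - b) * (1 - /(b*c))) by (field; lra).
  assert (/(b*c) <= 1).
  { rewrite <- Rinv_1. apply Rinv_le_contravar; nra. }
  nra.
Qed.

Definition L (M : R) := M + sqrt (M * (M + 1)).
Definition U (M : R) := 2 * M + sqrt (2 * M).

Lemma U_step M : 1 <= M -> U M + 2 + / U M <= U (M + 1).
Proof.
  intro HM. unfold U.
  set (x := sqrt (2*M)).
  assert (Hx2 : x * x = 2 * M) by (apply sqrt_sqrt; lra).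
  assert (Hx0 : 0 <= x) by apply sqrt_pos.
  assert (Hx1 : 1 <= x) by nra.
  replace (2 * (M+1)) with (x*x + 2) by lra.
  replace (2*M) with (x*x) by lra.
  set (t := / (x*x + x)).
  assert (Ht : t * (x*x + x) = 1) by (unfold t; field; nra).
  assert (Ht0 : 0 < t) by (unfold t; apply Rinv_0_lt_compat; nra).
  assert (Hxt : x * t <= 1/2) by nra.
  assert (Htt : t <= 1/2) by nra.
  assert (x + t <= sqrt (x*x+2)).
  { rewrite <- (sqrt_square (x+t)) by lra. apply sqrt_le_1; nra. }
  lra.
Qed.

Lemma L_step M : 1 <= M -> L (M + 1) <= L M + 2 + / L M.
Proof.
  intro HM. unfold L.
  set (s := sqrt (M * (M+1))).
  set (r := sqrt ((M+1) * (M+1+1))).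
  assert (Hs2 : s * s = M*(M+1)) by (apply sqrt_sqrt; nra).
  assert (Hr2 : r * r = (M+1)*(M+1+1)) by (apply sqrt_sqrt; nra).
  assert (Hs0 : 0 <= s) by apply sqrt_pos.
  assert (Hr0 : 0 <= r) by apply sqrt_pos.
  assert (HsM : M <= s) by nra.
  assert (Hr : r <= M + 3/2) by nra.
  set (u := / (M + s)).
  assert (Hu : u * (M + s) = 1) by (unfold u; field; lra).
  assert (Hu0 : 0 < u) by (unfold u; apply Rinv_0_lt_compat; lra).
  assert (Hk : (s - M - 1/2) * (s + M + 1/2) = - 1/4) by nra.
  assert (s + u >= M + 1/2) by nra.
  lra.
Qed.

Lemma main k :
  L (INR (3 + k)) <= (a_seq (3 + k))^2 <= U (INR (3 + k)).
Proof.
  induction k as [|k IH].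
  - simpl (3+0)%nat. rewrite sq_step, a_step. simpl (a_seq 1).
    replace (INR 3) with 3 by (simpl; lra). unfold L, U.
    assert (sqrt (3*(3+1)) <= 7/2).
    { rewrite <- (sqrt_square (7/2)) by lra. apply sqrt_le_1; lra. }
    assert (244/100 <= sqrt (2*3)).
    { rewrite <- (sqrt_square (244/100)) by lra. apply sqrt_le_1; lra. }
    split; field_simplify; lra.
  - replace (3 + S k)%nat with (S (S (S (S k)))) by lia.
    replace (3 + k)%nat with (S (S (S k))) in IH by lia.
    rewrite sq_step, S_INR.
    pose proof (a_pos (S (S (S k)))).
    assert (HM : 1 <= INR (S (S (S k)))) by (rewrite !S_INR; pose proof (pos_INR k); lra).
    destruct IH as [H1 H2].
    assert (1 <= L (INR (S (S (S k))))).
    { unfold L. pose proof (sqrt_pos (INR (S (S (S k))) * (INR (S (S (S k))) + 1))). lra. }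
    split.
    + eapply Rle_trans. apply L_step; lra. apply f_mono; lra.
    + eapply Rle_trans. 2: apply U_step; lra. apply f_mono; nra.
Qed.

Theorem theorem3p10 (m : nat) (hm : (3 <= m)%nat) :
  sqrt (INR m + sqrt (INR m * (INR m + 1))) <= a_seq m /\
  a_seq m <= sqrt (2 * INR m + sqrt (2 * INR m)).
Proof.
  replace m with (3 + (m - 3))%nat by lia.
  pose proof (main (m - 3)) as [H1 H2].
  pose proof (a_pos (3 + (m-3))).
  set (a := a_seq (3 + (m - 3))) in *.
  fold (L (INR (3 + (m-3)))) (U (INR (3 + (m-3)))).
  split.
  - rewrite <- (sqrt_square a) by lra. apply sqrt_le_1; try nra.
    unfold L. pose proof (pos_INR (3 + (m-3))).
    pose proof (sqrt_pos (INR (3 + (m - 3)) * (INR (3 + (m - 3)) + 1))). lra.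
  - rewrite <- (sqrt_square a) by lra. apply sqrt_le_1; try nra.
Qed.
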